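(* Let $(\Omega,\sqsubseteq)$ be a poset and $\mathcal{R}:\Omega\to\wp(\Omega)$ satisfy: ($\mathcal{R}$-monotonicity) if $\omega'\sqsubseteq\omega$ then $\mathcal{R}(\omega')\subseteq\mathcal{R}(\omega)$; ($\mathcal{R}$-regularity) $\mathcal{R}(\omega)\in\mathcal{RO}(\Omega,\sqsubseteq)$ for all $\omega$; ($\mathcal{R}$-refinability) if $\nu\in\mathcal{R}(\omega)$ then there is $\omega'\sqsubseteq\omega$ such that for all $\omega''\sqsubseteq\omega'$ there is $\nu'\sqsubseteq\nu$ with $\nu'\in\mathcal{R}(\omega'')$. Then for any $E\in\mathcal{RO}(\Omega,\sqsubseteq)$, we have $\{\omega\in\Omega\mid\mathcal{R}(\omega)\subseteq E\}\in\mathcal{RO}(\Omega,\sqsubseteq)$.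
   Context: $\downarrow E=\{\omega\mid\omega\sqsubseteq\nu\text{ for some }\nu\in E\}$; $\rho(E)=\{\omega\mid\forall\omega'\sqsubseteq\omega\ \exists\omega''\sqsubseteq\omega'\colon\omega''\in\downarrow E\}$; $\mathcal{RO}(\Omega,\sqsubseteq)=\{E\subseteq\Omega\mid\rho(E)=E\}$ is the set of regular open sets of the downset topology of $(\Omega,\sqsubseteq)$. *)

(* Defs.v *)
Definition is_poset {Omega : Type} (le : Omega -> Omega -> Prop) : Prop :=
  (forall x, le x x) /\
  (forall x y, le x y -> le y x -> x = y) /\
  (forall x y z, le x y -> le y z -> le x z).

Definition downset {Omega : Type} (le : Omega -> Omega -> Prop) (E : Omega -> Prop)
  : Omega -> Prop :=
  fun w => exists v, E v /\ le w v.

Definition rho {Omega : Type} (le : Omega -> Omega -> Prop) (E : Omega -> Prop)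
  : Omega -> Prop :=
  fun w => forall w', le w' w -> exists w'', le w'' w' /\ downset le E w''.

Definition regular_open {Omega : Type} (le : Omega -> Omega -> Prop) (E : Omega -> Prop)
  : Prop :=
  forall w, rho le E w <-> E w.

(* Main.v *)
Require Import Defs.

Theorem lemma3p10 (Omega : Type) (le : Omega -> Omega -> Prop)
  (Hposet : is_poset le)
  (R : Omega -> Omega -> Prop)
  (* R w is the set R(w); membership ν ∈ R(ω) is [R w v] *)
  (Rmono : forall w w', le w' w -> forall v, R w' v -> R w v)
  (Rreg : forall w, regular_open le (R w))
  (Rrefine : forall w v, R w v ->
     exists w', le w' w /\
       forall w'', le w'' w' -> exists v', le v' v /\ R w'' v')
  (E : Omega -> Prop) (HE : regular_open le E) :
  regular_open le (fun w => forall v, R w v -> E v).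
Proof.
  destruct Hposet as [Hrefl [_ Htrans]].
  assert (Rdown : forall w v v', R w v -> le v' v -> R w v').
  { intros w v v' Hv Hle. apply (proj1 (Rreg w v')).
    intros u Hu. exists u. split; [apply Hrefl|].
    exists v; split; [exact Hv | eapply Htrans; eauto]. }
  assert (Gdown : forall w u, (forall v, R w v -> E v) -> le u w ->
                   forall v, R u v -> E v).
  { intros w u Hw Hle v Hv. apply Hw. eapply Rmono; eauto. }
  intro w; split.
  - intros Hw v Hv. apply (proj1 (HE v)).
    intros v' Hv'.
    assert (Hw' : R w v') by eauto.
    destruct (Rrefine w v' Hw') as [o' [Ho' Hall]].
    destruct (Hw o' Ho') as [o'' [Ho'' [u [Gu Hu]]]].
    destruct (Hall o'' Ho'') as [n [Hn Rn]].
    exists n. split; [exact Hn|]. exists n. split; [|apply Hrefl].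
    eapply Gdown; eauto.
  - intros Hw w' Hw'. exists w'. split; [apply Hrefl|].
    exists w. split; assumption.
Qed.
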